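(* (a) Let $\sigma^{(1)},\sigma^{(2)}$ be admissible controls with $\sigma^{(1)}(t)\ge\sigma^{(2)}(t)$ for all $t$, and let $w^{(i)}=(x_b^{(i)},x_d^{(i)},y^{(i)})$ solve $\dot w=f(t,w;\sigma^{(i)}(t))$ with $w^{(i)}(0)\in R(0)$ and $w^{(1)}(0)\ge w^{(2)}(0)$. Then $w^{(1)}(t)\ge w^{(2)}(t)$ for all $t\ge0$. (b) Let $y^{(1)},y^{(2)}:[0,\infty)\to\mathbb R$ be continuous with $s(t)\ge y^{(1)}(t)\ge y^{(2)}(t)\ge0$ for all $t$, and let $(x_b^{(i)},x_d^{(i)})$ solve $\dot{(x_b,x_d)}=g(t,(x_b,x_d);y^{(i)}(t))$ with $0\le x_b^{(i)}(0)\le b(0)$, $0\le x_d^{(i)}(0)\le d(0)$ and $(x_b^{(1)}(0),x_d^{(1)}(0))\ge(x_b^{(2)}(0),x_d^{(2)}(0))$. Then $(x_b^{(1)}(t),x_d^{(1)}(t))\ge(x_b^{(2)}(t),x_d^{(2)}(t))$ for all $t\ge0$.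
   Context: Fix $\lambda>0$, $\beta>0$, $\Gamma\in(0,1]$, $d_0\in(0,1)$. Let $(b(t),d(t))$ solve $\dot b=\beta d$, $\dot d=-\beta d+\lambda\Gamma ds$ with $b(0)=0$, $d(0)=d_0$, where $s=1-b-d$. For $w=(x_b,x_d,y)$ and control value $\sigma\in[0,1]$, define $f(t,w;\sigma)=(f_{x_b},f_{x_d},f_y)$ by $f_{x_b}=\beta x_d+\lambda(b-x_b)(x+y)$, $f_{x_d}=\Gamma\lambda(d-x_d)y+\Gamma\lambda x_ds+\lambda(d-x_d)(x+y)-\beta x_d$, $f_y=-\Gamma\lambda dy+\lambda\sigma(s-y)(x_b+y+(1-\Gamma)x_d)$, with $x=x_b+x_d$ and $b,d,s$ evaluated at $t$. For $(x_b,x_d)$ and a control value $y$, $g(t,(x_b,x_d);y)=(f_{x_b},f_{x_d})$ with the same formulas. Region $R(t)=\{(x_b,x_d,y):0\le x_b\le b(t),\ 0\le x_d\le d(t),\ 0\le y\le s(t)\}$. Admissible controls are piecewise Lipschitz continuous $\sigma:[0,\infty)\to[0,1]$. Vector inequalities are componentwise. *)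

(* Defs.v *)
From Stdlib Require Import Reals Lra.
Open Scope R_scope.

Definition cont_nonneg (u : R -> R) : Prop :=
  forall t, 0 <= t -> forall eps, 0 < eps ->
    exists delta, 0 < delta /\
      forall s, 0 <= s -> Rabs (s - t) < delta -> Rabs (u s - u t) < eps.

Definition bd_solution (lam beta Gam d0 : R) (b d : R -> R) : Prop :=
  b 0 = 0 /\ d 0 = d0 /\ cont_nonneg b /\ cont_nonneg d /\
  forall t, 0 < t ->
    derivable_pt_lim b t (beta * d t) /\
    derivable_pt_lim d t (- beta * d t + lam * Gam * d t * (1 - b t - d t)).

(* Components of f (and g). Arguments: b, d, s evaluated at t. *)
Definition f_xb (lam beta : R) (b : R) (xb xd y : R) : R :=
  beta * xd + lam * (b - xb) * ((xb + xd) + y).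

Definition f_xd (lam beta Gam : R) (d s : R) (xb xd y : R) : R :=
  Gam * lam * (d - xd) * y + Gam * lam * xd * s
  + lam * (d - xd) * ((xb + xd) + y) - beta * xd.

Definition f_y (lam Gam : R) (d s : R) (sigma : R) (xb xd y : R) : R :=
  - Gam * lam * d * y + lam * sigma * (s - y) * (xb + y + (1 - Gam) * xd).

Definition partition (tau : nat -> R) : Prop :=
  tau 0%nat = 0 /\ (forall k, tau k < tau (S k)) /\
  (forall M, exists k, M < tau k).

Definition admissible (sigma : R -> R) : Prop :=
  (forall t, 0 <= t -> 0 <= sigma t <= 1) /\
  exists tau, partition tau /\
    forall k, exists L, forall s t,
      tau k <= s < tau (S k) -> tau k <= t < tau (S k) ->
      Rabs (sigma s - sigma t) <= L * Rabs (s - t).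

(* w = (xb,xd,y) solves w' = f(t,w;sigma(t)) on [0,+oo): w is continuous on
   [0,+oo) and satisfies the ODE classically at every t > 0 outside a locally
   finite set of switching points. *)
Definition f_solution (lam beta Gam : R) (b d sigma : R -> R)
    (xb xd y : R -> R) : Prop :=
  cont_nonneg xb /\ cont_nonneg xd /\ cont_nonneg y /\
  exists tau, partition tau /\
    forall t, 0 < t -> (forall k, t <> tau k) ->
      let s := 1 - b t - d t in
      derivable_pt_lim xb t (f_xb lam beta (b t) (xb t) (xd t) (y t)) /\
      derivable_pt_lim xd t (f_xd lam beta Gam (d t) s (xb t) (xd t) (y t)) /\
      derivable_pt_lim y t (f_y lam Gam (d t) s (sigma t) (xb t) (xd t) (y t)).

Definition g_solution (lam beta Gam : R) (b d y : R -> R)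
    (xb xd : R -> R) : Prop :=
  cont_nonneg xb /\ cont_nonneg xd /\
  forall t, 0 < t ->
    let s := 1 - b t - d t in
    derivable_pt_lim xb t (f_xb lam beta (b t) (xb t) (xd t) (y t)) /\
    derivable_pt_lim xd t (f_xd lam beta Gam (d t) s (xb t) (xd t) (y t)).

Definition in_region (b d : R -> R) (t xb xd y : R) : Prop :=
  0 <= xb <= b t /\ 0 <= xd <= d t /\ 0 <= y <= 1 - b t - d t.

(* Main.v *)
Require Import Defs.
From Stdlib Require Import Reals Lra Lia Classical Arith.
Open Scope R_scope.

Lemma cont_minus f g : cont_nonneg f -> cont_nonneg g -> cont_nonneg (fun t => f t - g t).
Proof.
  intros Hf Hg t Ht e He.
  destruct (Hf t Ht (e/2) ltac:(lra)) as [d1 [Hd1 H1]].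
  destruct (Hg t Ht (e/2) ltac:(lra)) as [d2 [Hd2 H2]].
  exists (Rmin d1 d2); split; [apply Rmin_pos; lra|].
  intros s Hs Hst.
  assert (A := H1 s Hs ltac:(pose proof (Rmin_l d1 d2); lra)).
  assert (B := H2 s Hs ltac:(pose proof (Rmin_r d1 d2); lra)).
  revert A B; unfold Rabs; repeat destruct Rcase_abs; lra.
Qed.

Lemma cont_plus f g : cont_nonneg f -> cont_nonneg g -> cont_nonneg (fun t => f t + g t).
Proof.
  intros Hf Hg t Ht e He.
  destruct (Hf t Ht (e/2) ltac:(lra)) as [d1 [Hd1 H1]].
  destruct (Hg t Ht (e/2) ltac:(lra)) as [d2 [Hd2 H2]].
  exists (Rmin d1 d2); split; [apply Rmin_pos; lra|].
  intros s Hs Hst.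
  assert (A := H1 s Hs ltac:(pose proof (Rmin_l d1 d2); lra)).
  assert (B := H2 s Hs ltac:(pose proof (Rmin_r d1 d2); lra)).
  revert A B; unfold Rabs; repeat destruct Rcase_abs; lra.
Qed.

Lemma cont_const c : cont_nonneg (fun _ => c).
Proof.
  intros t Ht e He. exists 1; split; [lra|]. intros s _ _.
  replace (c - c) with 0 by ring. rewrite Rabs_R0; lra.
Qed.

Lemma cont_of_cpt f : (forall t, continuity_pt f t) -> cont_nonneg f.
Proof.
  intros Hc t Ht e He.
  destruct (Hc t e He) as [d [Hd H]].
  exists d; split; [lra|]. intros s Hs Hst.
  destruct (Req_dec t s) as [<-|Hne].
  - replace (f t - f t) with 0 by ring. rewrite Rabs_R0; lra.
  - apply (H s). split; [split; [exact I| exact Hne]| exact Hst].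
Qed.

Lemma cpt_of_cont f t : cont_nonneg f -> 0 < t -> continuity_pt f t.
Proof.
  intros Hc Ht e He.
  destruct (Hc t (Rlt_le _ _ Ht) e He) as [d [Hd H]].
  exists (Rmin d t); split; [apply Rmin_pos; lra|].
  intros x [_ Hx]. simpl in *. unfold R_dist in *.
  pose proof (Rmin_l d t); pose proof (Rmin_r d t).
  apply H.
  - revert Hx; unfold Rabs; destruct Rcase_abs; lra.
  - lra.
Qed.

Lemma dlim_eq f x l l' : derivable_pt_lim f x l -> l = l' -> derivable_pt_lim f x l'.
Proof. intros H ->; exact H. Qed.

Lemma dlim_minus f g x l1 l2 : derivable_pt_lim f x l1 -> derivable_pt_lim g x l2 ->
  derivable_pt_lim (fun t => f t - g t) x (l1 - l2).
Proof. intros; apply (derivable_pt_lim_minus f g); auto. Qed.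

Lemma dlim_plus f g x l1 l2 : derivable_pt_lim f x l1 -> derivable_pt_lim g x l2 ->
  derivable_pt_lim (fun t => f t + g t) x (l1 + l2).
Proof. intros; apply (derivable_pt_lim_plus f g); auto. Qed.

Lemma dlim_const c x : derivable_pt_lim (fun _ => c) x 0.
Proof. apply (derivable_pt_lim_const c). Qed.

Lemma dlim_expterm eps M x :
  derivable_pt_lim (fun t => eps * exp (M * t)) x (eps * (M * exp (M * x))).
Proof.
  apply (derivable_pt_lim_scal (fun t => exp (M*t))).
  apply dlim_eq with (exp (M * x) * M); [|ring].
  apply (derivable_pt_lim_comp (fun t => M * t) exp).
  - apply dlim_eq with (M * 1); [|ring].
    apply (derivable_pt_lim_scal id). apply derivable_pt_lim_id.
  - apply derivable_pt_lim_exp.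
Qed.

Lemma mul_lb p q a1 a2 P Q : -a1 <= p <= P -> -a2 <= q <= Q -> 0 <= a1 -> 0 <= a2 ->
  0 <= P -> 0 <= Q -> - (a1 * Q + a2 * P) <= p * q.
Proof.
  intros [] [] ? ? ? ?.
  destruct (Rle_or_lt 0 p); destruct (Rle_or_lt 0 q).
  - assert (0 <= p*q) by (apply Rmult_le_pos; lra). nra.
  - nra.
  - nra.
  - nra.
Qed.

Lemma exp_le_exp x y : x <= y -> exp x <= exp y.
Proof. intros [H|H]; [left; apply exp_increasing; exact H|right; rewrite H; reflexivity]. Qed.

Lemma finite_min (n : nat) (Q : nat -> R -> Prop) :
  (forall i d d', 0 < d' <= d -> Q i d -> Q i d') ->
  (forall i, (i < n)%nat -> exists d, 0 < d /\ Q i d) ->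
  exists d, 0 < d /\ forall i, (i < n)%nat -> Q i d.
Proof.
  intros Hm. induction n as [|n IH]; intros H.
  - exists 1; split; [lra|]. intros i Hi; lia.
  - destruct IH as [d1 [Hd1 H1]]. { intros i Hi; apply H; lia. }
    destruct (H n ltac:(lia)) as [d2 [Hd2 H2]].
    exists (Rmin d1 d2); split; [apply Rmin_pos; lra|].
    intros i Hi. pose proof (Rmin_l d1 d2); pose proof (Rmin_r d1 d2).
    assert (0 < Rmin d1 d2) by (apply Rmin_pos; lra).
    destruct (Nat.eq_dec i n) as [->|Hne].
    + apply Hm with d2; [lra|exact H2].
    + apply Hm with d1; [lra|apply H1; lia].
Qed.

Lemma part_mono tau : partition tau -> forall k j, (k <= j)%nat -> tau k <= tau j.
Proof.
  intros [_ [Hinc _]] k j Hkj. induction Hkj; [lra|].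
  specialize (Hinc m); lra.
Qed.

Lemma part_iso tau : partition tau -> forall t, 0 < t ->
  exists dl, 0 < dl /\ forall s, t - dl < s < t -> forall k, s <> tau k.
Proof.
  intros Hp t Ht. pose proof Hp as [H0 [Hinc Hunb]].
  destruct (Hunb t) as [k Hk].
  assert (Hex : forall k, t <= tau k -> exists j, tau j < t <= tau (S j)).
  { induction k0 as [|k0 IH]; intros Hk0.
    - lra.
    - destruct (Rle_or_lt t (tau k0)) as [Hle|Hlt].
      + apply IH; exact Hle.
      + exists k0; split; lra. }
  destruct (Hex k ltac:(lra)) as [j [Hj1 Hj2]].
  exists (t - tau j); split; [lra|].
  intros s Hs m Hm. subst s.
  destruct (Compare_dec.le_lt_dec m j) as [Hmj|Hmj].
  - pose proof (part_mono tau Hp m j Hmj); lra.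
  - pose proof (part_mono tau Hp (S j) m Hmj); lra.
Qed.

Section Touch.
Lemma touch (n : nat) (u D : nat -> R -> R) (bad : R -> Prop) (T K : R) :
  0 <= K ->
  (forall i, (i < n)%nat -> cont_nonneg (u i)) ->
  (forall i, (i < n)%nat -> 0 <= u i 0) ->
  (forall t, 0 < t -> exists dl, 0 < dl /\ forall s, t - dl < s < t -> ~ bad s) ->
  (forall i t, (i < n)%nat -> 0 < t <= T -> ~ bad t -> derivable_pt_lim (u i) t (D i t)) ->
  (forall i t a, (i < n)%nat -> 0 < t <= T -> ~ bad t -> 0 < a <= 1 ->
      (forall j, (j < n)%nat -> - a <= u j t) -> u i t <= 0 -> - (K * a) <= D i t) ->
  forall i t, (i < n)%nat -> 0 <= t <= T -> 0 <= u i t.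
Proof.
  intros HK Hc H0 Hiso Hd Hcond.
  set (M := K + 1).
  assert (Main : forall eps, 0 < eps -> eps * exp (M * T) <= 1 ->
            forall i t, (i < n)%nat -> 0 <= t <= T -> 0 < u i t + eps * exp (M * t)).
  { intros eps Heps HeT.
    set (v := fun i t => u i t + eps * exp (M * t)).
    assert (Hexp : forall t, t <= T -> 0 < eps * exp (M * t) <= 1).
    { intros t Ht. split. apply Rmult_lt_0_compat; [lra|apply exp_pos].
      apply Rle_trans with (eps * exp (M * T)); [|exact HeT].
      apply Rmult_le_compat_l; [lra|]. apply exp_le_exp. unfold M; nra. }
    assert (Hvc : forall i, (i < n)%nat -> cont_nonneg (v i)).
    { intros i Hi. apply cont_plus; [apply Hc; exact Hi|].
      apply cont_of_cpt. intro t. apply derivable_continuous_pt.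
      exists (eps * (M * exp (M * t))). apply dlim_expterm. }
    apply NNPP; intro Hneg.
    apply not_all_ex_not in Hneg as [i0 Hneg].
    apply not_all_ex_not in Hneg as [t0 Hneg].
    apply imply_to_and in Hneg as [Hi0 Hneg].
    apply imply_to_and in Hneg as [Ht0 Hneg].
    apply Rnot_lt_le in Hneg. fold (v i0 t0) in Hneg.
    set (P := fun t => forall s, 0 <= s <= t -> forall i, (i < n)%nat -> 0 < v i s).
    set (E := fun t => 0 <= t <= T /\ P t).
    assert (HE0 : E 0).
    { split; [lra|]. intros s Hs i Hi. replace s with 0 by lra.
      unfold v. rewrite Rmult_0_r, exp_0. specialize (H0 i Hi); lra. }
    assert (Hb : bound E). { exists T. intros x [Hx _]; lra. }
    destruct (completeness E Hb (ex_intro _ 0 HE0)) as [ts [Hub Hlub]].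
    assert (Hts0 : 0 <= ts) by (apply Hub; exact HE0).
    assert (Hub0 : is_upper_bound E t0).
    { intros x [Hx HPx]. destruct (Rle_or_lt t0 x) as [Hle|Hlt]; [|lra].
      exfalso. specialize (HPx t0 ltac:(lra) i0 Hi0). lra. }
    assert (Htst0 : ts <= t0) by (apply Hlub; exact Hub0).
    assert (Pbelow : forall s, 0 <= s < ts -> forall i, (i < n)%nat -> 0 < v i s).
    { intros s Hs i Hi. apply NNPP; intro Hno.
      assert (Hubs : is_upper_bound E s).
      { intros x [Hx HPx]. destruct (Rle_or_lt x s) as [Hle|Hlt]; [exact Hle|].
        exfalso; apply Hno. apply HPx; [lra|exact Hi]. }
      specialize (Hlub s Hubs); lra. }
    destruct (classic (forall i, (i < n)%nat -> 0 < v i ts)) as [Hall|Hsome].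
    -
      destruct (finite_min n (fun i d => forall s, 0 <= s -> Rabs (s - ts) < d -> 0 < v i s))
        as [dl [Hdl Hdlp]].
      { intros i d d' Hd' Hq s Hs Hsd. apply Hq; [exact Hs|lra]. }
      { intros i Hi. destruct (Hvc i Hi ts Hts0 (v i ts) (Hall i Hi)) as [dl [Hdl Hq]].
        exists dl; split; [exact Hdl|]. intros s Hs Hsd.
        specialize (Hq s Hs Hsd). revert Hq; unfold Rabs; destruct Rcase_abs; lra. }
      assert (Hlt : ts < t0).
      { destruct (Rle_lt_or_eq_dec _ _ Htst0) as [|Heq]; [assumption|].
        subst ts. specialize (Hall i0 Hi0); lra. }
      set (m := Rmin (ts + dl/2) t0).
      assert (Hm1 : m <= ts + dl/2) by apply Rmin_l.
      assert (Hm2 : m <= t0) by apply Rmin_r.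
      assert (Hm3 : ts < m) by (unfold m; apply Rmin_glb_lt; lra).
      assert (HEm : E m).
      { split; [lra|]. intros s Hs i Hi.
        destruct (Rlt_or_le s ts) as [Hs'|Hs'].
        - apply Pbelow; [lra|exact Hi].
        - apply Hdlp; [exact Hi|lra|]. rewrite Rabs_right; lra. }
      specialize (Hub m HEm); lra.
    - apply not_all_ex_not in Hsome as [i Hsome].
      apply imply_to_and in Hsome as [Hi Hvi].
      apply Rnot_lt_le in Hvi.
      assert (Htspos : 0 < ts).
      { destruct (Rle_lt_or_eq_dec _ _ Hts0) as [|Heq]; [assumption|].
        subst ts. assert (HH := HE0). destruct HH as [_ HP0].
        specialize (HP0 0 ltac:(lra) i Hi). lra. }
      assert (HtsT : ts <= T) by lra.
      assert (Hui : u i ts < 0).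
      { pose proof (Hexp ts HtsT). unfold v in Hvi. lra. }
      destruct (Hc i Hi ts Hts0 (- u i ts) ltac:(lra)) as [d1 [Hd1 Hq1]].
      destruct (Hiso ts Htspos) as [d2 [Hd2 Hq2]].
      set (dl := Rmin (Rmin d1 d2) ts).
      assert (Hdl : 0 < dl) by (unfold dl; repeat apply Rmin_pos; lra).
      assert (Hdl1 : dl <= d1) by (unfold dl; pose proof (Rmin_l (Rmin d1 d2) ts); pose proof (Rmin_l d1 d2); lra).
      assert (Hdl2 : dl <= d2) by (unfold dl; pose proof (Rmin_l (Rmin d1 d2) ts); pose proof (Rmin_r d1 d2); lra).
      assert (Hdl3 : dl <= ts) by (unfold dl; apply Rmin_r).
      set (s0 := ts - dl/2).
      assert (Hgood : forall c, s0 < c < ts -> ~ bad c /\ u i c < 0 /\ 0 < c).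
      { intros c Hcc. split; [apply Hq2; unfold s0 in Hcc; lra|]. split; [|unfold s0 in Hcc; lra].
        assert (A := Hq1 c ltac:(unfold s0 in Hcc; lra) ltac:(rewrite Rabs_left; unfold s0 in Hcc; lra)).
        revert A; unfold Rabs; destruct Rcase_abs; lra. }
      assert (pr1 : forall c, s0 < c < ts -> derivable_pt (v i) c).
      { intros c Hcc. destruct (Hgood c Hcc) as [Hnb [_ Hcpos]].
        exists (D i c + eps * (M * exp (M * c))).
        apply dlim_plus; [apply Hd; [exact Hi|lra|exact Hnb]|apply dlim_expterm]. }
      assert (pr2 : forall c, s0 < c < ts -> derivable_pt id c).
      { intros c _. apply derivable_pt_id. }
      destruct (MVT (v i) id s0 ts pr1 pr2) as [c [Pc Heq]].
      + unfold s0; lra.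
      + intros c Hcc. apply cpt_of_cont; [apply Hvc; exact Hi|unfold s0 in Hcc; lra].
      + intros c _. apply derivable_continuous_pt, derivable_pt_id.
      + assert (Hid : derive_pt id c (pr2 c Pc) = 1) by (apply derive_pt_eq_0; apply derivable_pt_lim_id).
        rewrite Hid in Heq.
        destruct (Hgood c Pc) as [Hnb [Huic Hcpos]].
        assert (Hder : derive_pt (v i) c (pr1 c Pc) = D i c + eps * (M * exp (M * c))).
        { apply derive_pt_eq_0. apply dlim_plus; [apply Hd; [exact Hi|lra|exact Hnb]|apply dlim_expterm]. }
        rewrite Hder in Heq. unfold id in Heq.
        assert (Ha := Hexp c ltac:(lra)).
        assert (HD : - (K * (eps * exp (M * c))) <= D i c).
        { apply Hcond; [exact Hi|lra|exact Hnb|exact Ha| |lra].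
          intros j Hj. assert (W := Pbelow c ltac:(lra) j Hj). unfold v in W; lra. }
        assert (Hvs0 : 0 < v i s0) by (apply Pbelow; [unfold s0; lra|exact Hi]).
        assert (0 < D i c + eps * (M * exp (M * c))) by (unfold M in *; nra).
        assert (0 < ts - s0) by (unfold s0; lra).
        nra. }
  intros i t Hi Ht.
  apply Rnot_lt_le; intro Hlt.
  set (X := exp (M * T)).
  assert (HX : 0 < X) by apply exp_pos.
  set (eps := Rmin (1 / X) (- u i t / (2 * X))).
  assert (Heps : 0 < eps).
  { unfold eps; apply Rmin_pos; apply Rdiv_lt_0_compat; lra. }
  assert (HeX : eps * X <= 1).
  { unfold eps. apply Rle_trans with (1 / X * X); [apply Rmult_le_compat_r; [lra|apply Rmin_l]|].
    right; field; lra. }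
  assert (HeX2 : eps * X <= - u i t / 2).
  { unfold eps. apply Rle_trans with (- u i t / (2 * X) * X); [apply Rmult_le_compat_r; [lra|apply Rmin_r]|].
    right; field; lra. }
  assert (Hle : eps * exp (M * t) <= eps * X).
  { apply Rmult_le_compat_l; [lra|]. apply exp_le_exp. unfold M; nra. }
  specialize (Main eps Heps HeX i t Hi Ht). lra.
Qed.
End Touch.

Definition KK lam beta Gam := 100 * (beta + lam + Gam * lam).

Section Alg.
Variables (lam beta Gam sg a b d s xb xd y : R).
Hypotheses (Hl : 0 < lam) (Hb : 0 < beta) (HG : 0 < Gam <= 1) (Hs : 0 <= sg <= 1)
  (Ha : 0 < a <= 1) (Hsum : b + d + s = 1)
  (H0 : - a <= xb) (H1 : - a <= b - xb) (H2 : - a <= xd) (H3 : - a <= d - xd)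
  (H4 : - a <= y) (H5 : - a <= s - y).

Lemma Rmult_le_0_l p q : 0 <= p -> q <= 0 -> p * q <= 0.
Proof. intros; nra. Qed.

Lemma lam_scale c x m : 0 <= c -> m <= x -> c * m <= c * x.
Proof. intros; apply Rmult_le_compat_l; auto. Qed.

Lemma alg0 : xb <= 0 -> - (KK lam beta Gam * a) <= f_xb lam beta b xb xd y.
Proof.
  intro Hx. unfold f_xb, KK.
  assert (A := mul_lb (b - xb) (xb + xd + y) a (3*a) 6 5 ltac:(lra) ltac:(lra) ltac:(lra) ltac:(lra) ltac:(lra) ltac:(lra)).
  assert (B := lam_scale lam _ _ ltac:(lra) A).
  assert (C := lam_scale beta xd (-a) ltac:(lra) H2).
  assert (0 <= Gam * lam * a) by (apply Rmult_le_pos; [apply Rmult_le_pos|]; lra).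
  assert (0 <= lam * a) by (apply Rmult_le_pos; lra).
  assert (0 <= beta * a) by (apply Rmult_le_pos; lra).
  lra.
Qed.

Ltac pos3 := repeat match goal with |- 0 <= _ * _ => apply Rmult_le_pos end; lra.

Lemma alg1 : b - xb <= 0 -> - (KK lam beta Gam * a) <= beta * d - f_xb lam beta b xb xd y.
Proof.
  intro Hx. unfold f_xb, KK.
  assert (A := mul_lb (-(b - xb)) (xb + xd + y) 0 (3*a) 1 4 ltac:(lra) ltac:(lra) ltac:(lra) ltac:(lra) ltac:(lra) ltac:(lra)).
  assert (B := lam_scale lam _ _ ltac:(lra) A).
  assert (C := lam_scale beta (d - xd) (-a) ltac:(lra) H3).
  assert (0 <= Gam * lam * a) by pos3.
  assert (0 <= lam * a) by pos3.
  assert (0 <= beta * a) by pos3.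
  lra.
Qed.

Lemma alg2 : xd <= 0 -> - (KK lam beta Gam * a) <= f_xd lam beta Gam d s xb xd y.
Proof.
  intro Hx. unfold f_xd, KK.
  assert (A1 := mul_lb (d - xd) y a a 6 6 ltac:(lra) ltac:(lra) ltac:(lra) ltac:(lra) ltac:(lra) ltac:(lra)).
  assert (B1 := lam_scale (Gam * lam) _ _ ltac:(pos3) A1).
  assert (A2 := mul_lb xd s a (2*a) 0 5 ltac:(lra) ltac:(lra) ltac:(lra) ltac:(lra) ltac:(lra) ltac:(lra)).
  assert (B2 := lam_scale (Gam * lam) _ _ ltac:(pos3) A2).
  assert (A3 := mul_lb (d - xd) (xb + xd + y) a (3*a) 6 5 ltac:(lra) ltac:(lra) ltac:(lra) ltac:(lra) ltac:(lra) ltac:(lra)).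
  assert (B3 := lam_scale lam _ _ ltac:(lra) A3).
  assert (C := lam_scale beta xd (-a) ltac:(lra) H2).
  assert (0 <= Gam * lam * a) by pos3.
  assert (0 <= lam * a) by pos3.
  assert (0 <= beta * a) by pos3.
  assert (beta * xd <= 0) by (apply Rmult_le_0_l; lra).
  lra.
Qed.

Lemma alg3 : d - xd <= 0 ->
  - (KK lam beta Gam * a) <= (- beta * d + lam * Gam * d * s) - f_xd lam beta Gam d s xb xd y.
Proof.
  intro Hx. unfold f_xd, KK.
  assert (A1 := mul_lb (d - xd) (s - y) a a 0 6 ltac:(lra) ltac:(lra) ltac:(lra) ltac:(lra) ltac:(lra) ltac:(lra)).
  assert (B1 := lam_scale (Gam * lam) _ _ ltac:(pos3) A1).
  assert (A3 := mul_lb (-(d - xd)) (xb + xd + y) 0 (3*a) 1 4 ltac:(lra) ltac:(lra) ltac:(lra) ltac:(lra) ltac:(lra) ltac:(lra)).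
  assert (B3 := lam_scale lam _ _ ltac:(lra) A3).
  assert (C : beta * (d - xd) <= 0) by (apply Rmult_le_0_l; lra).
  assert (0 <= Gam * lam * a) by pos3.
  assert (0 <= lam * a) by pos3.
  assert (0 <= beta * a) by pos3.
  lra.
Qed.

Lemma aux_Q : -3 * a <= xb + y + (1 - Gam) * xd <= 12.
Proof.
  assert (- a <= (1 - Gam) * xd).
  { apply Rle_trans with ((1 - Gam) * (-a)). nra. apply lam_scale; lra. }
  assert ((1 - Gam) * xd <= 6).
  { destruct (Rle_or_lt 0 xd). nra. assert ((1 - Gam) * xd <= 0) by (apply Rmult_le_0_l; lra). lra. }
  lra.
Qed.

Lemma alg4 : y <= 0 -> - (KK lam beta Gam * a) <= f_y lam Gam d s sg xb xd y.
Proof.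
  intro Hx. unfold f_y, KK. pose proof aux_Q.
  assert (A1 := mul_lb d (-y) (2*a) 0 5 1 ltac:(lra) ltac:(lra) ltac:(lra) ltac:(lra) ltac:(lra) ltac:(lra)).
  assert (B1 := lam_scale (Gam * lam) _ _ ltac:(pos3) A1).
  assert (A2 := mul_lb (s - y) (xb + y + (1 - Gam) * xd) a (3*a) 6 12 ltac:(lra) ltac:(lra) ltac:(lra) ltac:(lra) ltac:(lra) ltac:(lra)).
  assert (B2 := lam_scale (lam * sg) _ _ ltac:(pos3) A2).
  assert (C2 : lam * sg * (- (a * 12 + 3 * a * 6)) >= lam * (- (a * 12 + 3 * a * 6))).
  { assert (0 <= lam * (a * 12 + 3 * a * 6) * (1 - sg)) by pos3. nra. }
  assert (0 <= Gam * lam * a) by pos3.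
  assert (0 <= lam * a) by pos3.
  assert (0 <= beta * a) by pos3.
  lra.
Qed.

Lemma alg5 : s - y <= 0 ->
  - (KK lam beta Gam * a) <= (0 - beta * d - (- beta * d + lam * Gam * d * s)) - f_y lam Gam d s sg xb xd y.
Proof.
  intro Hx. unfold f_y, KK. pose proof aux_Q.
  assert (A1 := mul_lb d (-(s - y)) (2*a) 0 5 1 ltac:(lra) ltac:(lra) ltac:(lra) ltac:(lra) ltac:(lra) ltac:(lra)).
  assert (B1 := lam_scale (Gam * lam) _ _ ltac:(pos3) A1).
  assert (A2 := mul_lb (-(s - y)) (xb + y + (1 - Gam) * xd) 0 (3*a) 1 12 ltac:(lra) ltac:(lra) ltac:(lra) ltac:(lra) ltac:(lra) ltac:(lra)).
  assert (B2 := lam_scale (lam * sg) _ _ ltac:(pos3) A2).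
  assert (C2 : lam * sg * (- (0 * 12 + 3 * a * 1)) >= lam * (- (0 * 12 + 3 * a * 1))).
  { assert (0 <= lam * (0 * 12 + 3 * a * 1) * (1 - sg)) by pos3. nra. }
  assert (0 <= Gam * lam * a) by pos3.
  assert (0 <= lam * a) by pos3.
  assert (0 <= beta * a) by pos3.
  lra.
Qed.
End Alg.

Ltac pos3 := repeat match goal with |- 0 <= _ * _ => apply Rmult_le_pos end; lra.

Section Cmp.
Variables (lam beta Gam s1 s2 a b d s xb1 xd1 y1 xb2 xd2 y2 : R).
Hypotheses (Hl : 0 < lam) (Hb : 0 < beta) (HG : 0 < Gam <= 1)
  (Hs1 : 0 <= s1 <= 1) (Hs2 : 0 <= s2 <= 1) (Hs12 : s2 <= s1)
  (Ha : 0 < a <= 1) (Hsum : b + d + s = 1)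
  (R1 : 0 <= xb1 <= b) (R2 : 0 <= xd1 <= d) (R3 : 0 <= y1 <= s)
  (R4 : 0 <= xb2 <= b) (R5 : 0 <= xd2 <= d) (R6 : 0 <= y2 <= s)
  (U1 : - a <= xb1 - xb2) (U2 : - a <= xd1 - xd2) (U3 : - a <= y1 - y2).

Lemma cmp0 : xb1 - xb2 <= 0 ->
  - (KK lam beta Gam * a) <= f_xb lam beta b xb1 xd1 y1 - f_xb lam beta b xb2 xd2 y2.
Proof.
  intro Hx. unfold f_xb, KK.
  assert (A := mul_lb (b - xb1) ((xb1 - xb2) + (xd1 - xd2) + (y1 - y2)) 0 (3*a) 1 3
     ltac:(lra) ltac:(lra) ltac:(lra) ltac:(lra) ltac:(lra) ltac:(lra)).
  assert (B := lam_scale lam _ _ ltac:(lra) A).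
  assert (C := lam_scale beta _ _ ltac:(lra) U2).
  assert (E : 0 <= lam * (- (xb1 - xb2)) * (xb2 + xd2 + y2)) by pos3.
  assert (0 <= Gam * lam * a) by pos3.
  assert (0 <= lam * a) by pos3.
  assert (0 <= beta * a) by pos3.
  lra.
Qed.

Lemma cmp1 : xd1 - xd2 <= 0 ->
  - (KK lam beta Gam * a) <= f_xd lam beta Gam d s xb1 xd1 y1 - f_xd lam beta Gam d s xb2 xd2 y2.
Proof.
  intro Hx. unfold f_xd, KK.
  assert (A1 := mul_lb (d - xd1) (y1 - y2) 0 a 1 1
     ltac:(lra) ltac:(lra) ltac:(lra) ltac:(lra) ltac:(lra) ltac:(lra)).
  assert (B1 := lam_scale (Gam * lam) _ _ ltac:(pos3) A1).
  assert (E1 : 0 <= Gam * lam * (- (xd1 - xd2)) * y2) by pos3.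
  assert (A2 := mul_lb s (xd1 - xd2) 0 a 1 0
     ltac:(lra) ltac:(lra) ltac:(lra) ltac:(lra) ltac:(lra) ltac:(lra)).
  assert (B2 := lam_scale (Gam * lam) _ _ ltac:(pos3) A2).
  assert (A3 := mul_lb (d - xd1) ((xb1 - xb2) + (xd1 - xd2) + (y1 - y2)) 0 (3*a) 1 3
     ltac:(lra) ltac:(lra) ltac:(lra) ltac:(lra) ltac:(lra) ltac:(lra)).
  assert (B3 := lam_scale lam _ _ ltac:(lra) A3).
  assert (E3 : 0 <= lam * (- (xd1 - xd2)) * (xb2 + xd2 + y2)) by pos3.
  assert (E4 : 0 <= beta * (- (xd1 - xd2))) by pos3.
  assert (0 <= Gam * lam * a) by pos3.
  assert (0 <= lam * a) by pos3.
  assert (0 <= beta * a) by pos3.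
  lra.
Qed.

Lemma cmp2 : y1 - y2 <= 0 ->
  - (KK lam beta Gam * a) <= f_y lam Gam d s s1 xb1 xd1 y1 - f_y lam Gam d s s2 xb2 xd2 y2.
Proof.
  intro Hx. unfold KK.
  set (Q2 := xb2 + y2 + (1 - Gam) * xd2).
  set (dQ := (xb1 - xb2) + (y1 - y2) + (1 - Gam) * (xd1 - xd2)).
  assert (0 <= (1 - Gam) * xd2) by pos3.
  assert (HQ2 : 0 <= Q2) by (unfold Q2; lra).
  assert (HdQ1 : - a <= (1 - Gam) * (xd1 - xd2)).
  { destruct (Rle_or_lt 0 (xd1 - xd2)).
    assert (0 <= (1 - Gam) * (xd1 - xd2)) by pos3. lra.
    apply Rle_trans with ((1 - Gam) * (-a)). nra. apply lam_scale; lra. }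
  assert (HdQ2 : (1 - Gam) * (xd1 - xd2) <= 1).
  { destruct (Rle_or_lt 0 (xd1 - xd2)). nra.
    assert ((1 - Gam) * (xd1 - xd2) <= 0) by (apply Rmult_le_0_l; lra). lra. }
  assert (Hid : f_y lam Gam d s s1 xb1 xd1 y1 - f_y lam Gam d s s2 xb2 xd2 y2 =
     - Gam * lam * d * (y1 - y2) + lam * ((s1 - s2) * (s - y2) * Q2
        + (s1 * (s - y1)) * dQ + s1 * (- (y1 - y2)) * Q2)).
  { unfold f_y, Q2, dQ. ring. }
  rewrite Hid.
  assert (E1 : 0 <= Gam * lam * d * (- (y1 - y2))) by pos3.
  assert (E2 : 0 <= (s1 - s2) * (s - y2) * Q2) by pos3.
  assert (E3 : 0 <= s1 * (- (y1 - y2)) * Q2) by pos3.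
  assert (Hp : 0 <= s1 * (s - y1) <= 1).
  { split. pos3. assert (s1 * (s - y1) <= 1 * 1) by (apply Rmult_le_compat; lra). lra. }
  assert (A := mul_lb (s1 * (s - y1)) dQ 0 (3*a) 1 3
     ltac:(lra) ltac:(unfold dQ; lra) ltac:(lra) ltac:(lra) ltac:(lra) ltac:(lra)).
  assert (B := lam_scale lam _ _ ltac:(lra) (Rplus_le_compat _ _ _ _ (Rplus_le_compat _ _ _ _ E2 A) E3)).
  assert (0 <= Gam * lam * a) by pos3.
  assert (0 <= lam * a) by pos3.
  assert (0 <= beta * a) by pos3.
  lra.
Qed.
End Cmp.

Lemma region_f lam beta Gam d0 b d sig xb xd y :
  0 < lam -> 0 < beta -> 0 < Gam <= 1 -> bd_solution lam beta Gam d0 b d ->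
  (forall t, 0 <= t -> 0 <= sig t <= 1) ->
  f_solution lam beta Gam b d sig xb xd y ->
  in_region b d 0 (xb 0) (xd 0) (y 0) ->
  forall t, 0 <= t -> in_region b d t (xb t) (xd t) (y t).
Proof.
  intros Hl Hb HG Hbd Hsig Hf Hr0 t Ht.
  destruct Hbd as [_ [_ [Hcb [Hcd Hdbd]]]].
  destruct Hf as [Hcx [Hcxd [Hcy [tau [Htau Hder]]]]].
  set (u := fun (i : nat) t => match i with
     | 0%nat => xb t | 1%nat => b t - xb t | 2%nat => xd t | 3%nat => d t - xd t
     | 4%nat => y t | _ => (1 - b t - d t) - y t end).
  set (D := fun (i : nat) t => let s := 1 - b t - d t in match i with
     | 0%nat => f_xb lam beta (b t) (xb t) (xd t) (y t)
     | 1%nat => beta * d t - f_xb lam beta (b t) (xb t) (xd t) (y t)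
     | 2%nat => f_xd lam beta Gam (d t) s (xb t) (xd t) (y t)
     | 3%nat => (- beta * d t + lam * Gam * d t * s) - f_xd lam beta Gam (d t) s (xb t) (xd t) (y t)
     | 4%nat => f_y lam Gam (d t) s (sig t) (xb t) (xd t) (y t)
     | _ => (0 - beta * d t - (- beta * d t + lam * Gam * d t * s)) - f_y lam Gam (d t) s (sig t) (xb t) (xd t) (y t) end).
  assert (Hall : forall i, (i < 6)%nat -> 0 <= u i t).
  { intros i Hi.
    apply (touch 6 u D (fun t => exists k, t = tau k) t (KK lam beta Gam)).
    - unfold KK. assert (0 <= Gam * lam) by (apply Rmult_le_pos; lra). lra.
    - intros j Hj. unfold u.
      destruct j as [|[|[|[|[|[|j]]]]]]; try lia;
      repeat first [apply cont_minus | apply cont_const | assumption].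
    - intros j Hj. unfold u. destruct Hr0 as [[? ?] [[? ?] [? ?]]].
      destruct j as [|[|[|[|[|[|j]]]]]]; try lia; lra.
    - intros t0 Ht0. destruct (part_iso tau Htau t0 Ht0) as [dl [Hdl Hq]].
      exists dl; split; [exact Hdl|]. intros s Hs [k Hk]. exact (Hq s Hs k Hk).
    - intros j t0 Hj Ht0 Hnb.
      assert (Hnb' : forall k, t0 <> tau k) by (intros k Hk; apply Hnb; exists k; exact Hk).
      destruct (Hder t0 ltac:(lra) Hnb') as [D1 [D2 D3]].
      destruct (Hdbd t0 ltac:(lra)) as [Db Dd].
      unfold u, D. destruct j as [|[|[|[|[|[|j]]]]]]; try lia.
      + exact D1.
      + apply dlim_minus; assumption.
      + exact D2.
      + apply dlim_minus; assumption.
      + exact D3.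
      + apply dlim_minus; [|exact D3].
        apply dlim_minus; [|exact Dd]. apply dlim_minus; [apply dlim_const|exact Db].
    - intros j t0 a Hj Ht0 Hnb Ha Hlow Hle.
      pose proof (Hlow 0%nat ltac:(lia)) as L0.
      pose proof (Hlow 1%nat ltac:(lia)) as L1.
      pose proof (Hlow 2%nat ltac:(lia)) as L2.
      pose proof (Hlow 3%nat ltac:(lia)) as L3.
      pose proof (Hlow 4%nat ltac:(lia)) as L4.
      pose proof (Hlow 5%nat ltac:(lia)) as L5.
      unfold u in L0, L1, L2, L3, L4, L5.
      assert (Hsum : b t0 + d t0 + (1 - b t0 - d t0) = 1) by ring.
      assert (Hs0 := Hsig t0 ltac:(lra)).
      unfold u in Hle; unfold D. destruct j as [|[|[|[|[|[|j]]]]]]; try lia.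
      + eapply alg0; eauto.
      + eapply alg1; eauto.
      + eapply alg2; eauto.
      + eapply alg3; eauto.
      + eapply alg4; eauto.
      + eapply alg5; eauto.
    - exact Hi.
    - lra. }
  pose proof (Hall 0%nat ltac:(lia)); pose proof (Hall 1%nat ltac:(lia));
  pose proof (Hall 2%nat ltac:(lia)); pose proof (Hall 3%nat ltac:(lia));
  pose proof (Hall 4%nat ltac:(lia)); pose proof (Hall 5%nat ltac:(lia)).
  unfold u in *. unfold in_region. lra.
Qed.

Lemma region_g lam beta Gam d0 b d y xb xd :
  0 < lam -> 0 < beta -> 0 < Gam <= 1 -> bd_solution lam beta Gam d0 b d ->
  (forall t, 0 <= t -> 1 - b t - d t >= y t /\ y t >= 0) ->
  g_solution lam beta Gam b d y xb xd ->
  0 <= xb 0 <= b 0 -> 0 <= xd 0 <= d 0 ->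
  forall t, 0 <= t -> 0 <= xb t <= b t /\ 0 <= xd t <= d t.
Proof.
  intros Hl Hb HG Hbd Hy Hg Hx0 Hd0 t Ht.
  destruct Hbd as [_ [_ [Hcb [Hcd Hdbd]]]].
  destruct Hg as [Hcx [Hcxd Hder]].
  set (u := fun (i : nat) t => match i with
     | 0%nat => xb t | 1%nat => b t - xb t | 2%nat => xd t | _ => d t - xd t end).
  set (D := fun (i : nat) t => let s := 1 - b t - d t in match i with
     | 0%nat => f_xb lam beta (b t) (xb t) (xd t) (y t)
     | 1%nat => beta * d t - f_xb lam beta (b t) (xb t) (xd t) (y t)
     | 2%nat => f_xd lam beta Gam (d t) s (xb t) (xd t) (y t)
     | _ => (- beta * d t + lam * Gam * d t * s) - f_xd lam beta Gam (d t) s (xb t) (xd t) (y t) end).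
  assert (Hall : forall i, (i < 4)%nat -> 0 <= u i t).
  { intros i Hi.
    apply (touch 4 u D (fun _ => False) t (KK lam beta Gam)).
    - unfold KK. assert (0 <= Gam * lam) by (apply Rmult_le_pos; lra). lra.
    - intros j Hj. unfold u.
      destruct j as [|[|[|[|j]]]]; try lia;
      repeat first [apply cont_minus | apply cont_const | assumption].
    - intros j Hj. unfold u.
      destruct j as [|[|[|[|j]]]]; try lia; lra.
    - intros t0 Ht0. exists 1; split; [lra|]. intros s _ F; exact F.
    - intros j t0 Hj Ht0 _.
      destruct (Hder t0 ltac:(lra)) as [D1 D2].
      destruct (Hdbd t0 ltac:(lra)) as [Db Dd].
      unfold u, D. destruct j as [|[|[|[|j]]]]; try lia.
      + exact D1.
      + apply dlim_minus; assumption.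
      + exact D2.
      + apply dlim_minus; assumption.
    - intros j t0 a Hj Ht0 _ Ha Hlow Hle.
      pose proof (Hlow 0%nat ltac:(lia)) as L0.
      pose proof (Hlow 1%nat ltac:(lia)) as L1.
      pose proof (Hlow 2%nat ltac:(lia)) as L2.
      pose proof (Hlow 3%nat ltac:(lia)) as L3.
      unfold u in L0, L1, L2, L3.
      assert (Hsum : b t0 + d t0 + (1 - b t0 - d t0) = 1) by ring.
      destruct (Hy t0 ltac:(lra)) as [Y1 Y2].
      assert (L4 : - a <= y t0) by lra.
      assert (L5 : - a <= (1 - b t0 - d t0) - y t0) by lra.
      unfold u in Hle; unfold D. destruct j as [|[|[|[|j]]]]; try lia.
      + eapply alg0; eauto.
      + eapply alg1; eauto.
      + eapply alg2; eauto.
      + eapply alg3; eauto.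
    - exact Hi.
    - lra. }
  pose proof (Hall 0%nat ltac:(lia)); pose proof (Hall 1%nat ltac:(lia));
  pose proof (Hall 2%nat ltac:(lia)); pose proof (Hall 3%nat ltac:(lia)).
  unfold u in *. lra.
Qed.

Lemma comp_a lam beta Gam d0 b d sig1 sig2 xb1 xd1 y1 xb2 xd2 y2 :
  0 < lam -> 0 < beta -> 0 < Gam <= 1 -> bd_solution lam beta Gam d0 b d ->
  (forall t, 0 <= t -> 0 <= sig1 t <= 1) -> (forall t, 0 <= t -> 0 <= sig2 t <= 1) ->
  (forall t, 0 <= t -> sig1 t >= sig2 t) ->
  f_solution lam beta Gam b d sig1 xb1 xd1 y1 ->
  f_solution lam beta Gam b d sig2 xb2 xd2 y2 ->
  in_region b d 0 (xb1 0) (xd1 0) (y1 0) ->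
  in_region b d 0 (xb2 0) (xd2 0) (y2 0) ->
  xb1 0 >= xb2 0 -> xd1 0 >= xd2 0 -> y1 0 >= y2 0 ->
  forall t, 0 <= t -> xb1 t >= xb2 t /\ xd1 t >= xd2 t /\ y1 t >= y2 t.
Proof.
  intros Hl Hb HG Hbd Hs1 Hs2 Hs12 Hf1 Hf2 Hr1 Hr2 I1 I2 I3 t Ht.
  assert (Reg1 := region_f _ _ _ _ _ _ _ _ _ _ Hl Hb HG Hbd Hs1 Hf1 Hr1).
  assert (Reg2 := region_f _ _ _ _ _ _ _ _ _ _ Hl Hb HG Hbd Hs2 Hf2 Hr2).
  destruct Hf1 as [Ca1 [Ca2 [Ca3 [tau1 [Htau1 Hder1]]]]].
  destruct Hf2 as [Cb1 [Cb2 [Cb3 [tau2 [Htau2 Hder2]]]]].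
  set (u := fun (i : nat) t => match i with
     | 0%nat => xb1 t - xb2 t | 1%nat => xd1 t - xd2 t | _ => y1 t - y2 t end).
  set (D := fun (i : nat) t => let s := 1 - b t - d t in match i with
     | 0%nat => f_xb lam beta (b t) (xb1 t) (xd1 t) (y1 t) - f_xb lam beta (b t) (xb2 t) (xd2 t) (y2 t)
     | 1%nat => f_xd lam beta Gam (d t) s (xb1 t) (xd1 t) (y1 t) - f_xd lam beta Gam (d t) s (xb2 t) (xd2 t) (y2 t)
     | _ => f_y lam Gam (d t) s (sig1 t) (xb1 t) (xd1 t) (y1 t) - f_y lam Gam (d t) s (sig2 t) (xb2 t) (xd2 t) (y2 t) end).
  assert (Hall : forall i, (i < 3)%nat -> 0 <= u i t).
  { intros i Hi.
    apply (touch 3 u D (fun t => (exists k, t = tau1 k) \/ (exists k, t = tau2 k)) t (KK lam beta Gam)).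
    - unfold KK. assert (0 <= Gam * lam) by (apply Rmult_le_pos; lra). lra.
    - intros j Hj. unfold u.
      destruct j as [|[|[|j]]]; try lia; apply cont_minus; assumption.
    - intros j Hj. unfold u.
      destruct j as [|[|[|j]]]; try lia; lra.
    - intros t0 Ht0. destruct (part_iso tau1 Htau1 t0 Ht0) as [e1 [He1 Hq1]].
      destruct (part_iso tau2 Htau2 t0 Ht0) as [e2 [He2 Hq2]].
      exists (Rmin e1 e2); split; [apply Rmin_pos; lra|].
      pose proof (Rmin_l e1 e2); pose proof (Rmin_r e1 e2).
      intros s Hs [[k Hk]|[k Hk]].
      + exact (Hq1 s ltac:(lra) k Hk).
      + exact (Hq2 s ltac:(lra) k Hk).
    - intros j t0 Hj Ht0 Hnb.
      assert (N1 : forall k, t0 <> tau1 k) by (intros k Hk; apply Hnb; left; exists k; exact Hk).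
      assert (N2 : forall k, t0 <> tau2 k) by (intros k Hk; apply Hnb; right; exists k; exact Hk).
      destruct (Hder1 t0 ltac:(lra) N1) as [D1 [D2 D3]].
      destruct (Hder2 t0 ltac:(lra) N2) as [E1 [E2 E3]].
      unfold u, D. destruct j as [|[|[|j]]]; try lia; apply dlim_minus; assumption.
    - intros j t0 a Hj Ht0 _ Ha Hlow Hle.
      pose proof (Hlow 0%nat ltac:(lia)) as L0.
      pose proof (Hlow 1%nat ltac:(lia)) as L1.
      pose proof (Hlow 2%nat ltac:(lia)) as L2.
      unfold u in L0, L1, L2.
      assert (Hsum : b t0 + d t0 + (1 - b t0 - d t0) = 1) by ring.
      destruct (Reg1 t0 ltac:(lra)) as [R1 [R2 R3]].
      destruct (Reg2 t0 ltac:(lra)) as [R4 [R5 R6]].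
      assert (S1 := Hs1 t0 ltac:(lra)). assert (S2 := Hs2 t0 ltac:(lra)).
      assert (S12 := Hs12 t0 ltac:(lra)). apply Rge_le in S12.
      unfold u in Hle; unfold D. destruct j as [|[|[|j]]]; try lia.
      + eapply cmp0; eauto.
      + eapply cmp1; eauto.
      + eapply cmp2; eauto.
    - exact Hi.
    - lra. }
  pose proof (Hall 0%nat ltac:(lia)); pose proof (Hall 1%nat ltac:(lia));
  pose proof (Hall 2%nat ltac:(lia)).
  unfold u in *. lra.
Qed.

Lemma comp_b lam beta Gam d0 b d y1 y2 xb1 xd1 xb2 xd2 :
  0 < lam -> 0 < beta -> 0 < Gam <= 1 -> bd_solution lam beta Gam d0 b d ->
  (forall t, 0 <= t -> 1 - b t - d t >= y1 t /\ y1 t >= y2 t /\ y2 t >= 0) ->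
  g_solution lam beta Gam b d y1 xb1 xd1 ->
  g_solution lam beta Gam b d y2 xb2 xd2 ->
  0 <= xb1 0 <= b 0 -> 0 <= xd1 0 <= d 0 ->
  0 <= xb2 0 <= b 0 -> 0 <= xd2 0 <= d 0 ->
  xb1 0 >= xb2 0 -> xd1 0 >= xd2 0 ->
  forall t, 0 <= t -> xb1 t >= xb2 t /\ xd1 t >= xd2 t.
Proof.
  intros Hl Hb HG Hbd Hy Hg1 Hg2 I1 I2 I3 I4 I5 I6 t Ht.
  assert (Hy1 : forall t, 0 <= t -> 1 - b t - d t >= y1 t /\ y1 t >= 0)
    by (intros t0 Ht0; destruct (Hy t0 Ht0); lra).
  assert (Hy2 : forall t, 0 <= t -> 1 - b t - d t >= y2 t /\ y2 t >= 0)
    by (intros t0 Ht0; destruct (Hy t0 Ht0); lra).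
  assert (Reg1 := region_g _ _ _ _ _ _ _ _ _ Hl Hb HG Hbd Hy1 Hg1 I1 I2).
  assert (Reg2 := region_g _ _ _ _ _ _ _ _ _ Hl Hb HG Hbd Hy2 Hg2 I3 I4).
  destruct Hg1 as [Ca1 [Ca2 Hder1]].
  destruct Hg2 as [Cb1 [Cb2 Hder2]].
  set (u := fun (i : nat) t => match i with
     | 0%nat => xb1 t - xb2 t | _ => xd1 t - xd2 t end).
  set (D := fun (i : nat) t => let s := 1 - b t - d t in match i with
     | 0%nat => f_xb lam beta (b t) (xb1 t) (xd1 t) (y1 t) - f_xb lam beta (b t) (xb2 t) (xd2 t) (y2 t)
     | _ => f_xd lam beta Gam (d t) s (xb1 t) (xd1 t) (y1 t) - f_xd lam beta Gam (d t) s (xb2 t) (xd2 t) (y2 t) end).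
  assert (Hall : forall i, (i < 2)%nat -> 0 <= u i t).
  { intros i Hi.
    apply (touch 2 u D (fun _ => False) t (KK lam beta Gam)).
    - unfold KK. assert (0 <= Gam * lam) by (apply Rmult_le_pos; lra). lra.
    - intros j Hj. unfold u.
      destruct j as [|[|j]]; try lia; apply cont_minus; assumption.
    - intros j Hj. unfold u.
      destruct j as [|[|j]]; try lia; lra.
    - intros t0 Ht0. exists 1; split; [lra|]. intros s _ F; exact F.
    - intros j t0 Hj Ht0 _.
      destruct (Hder1 t0 ltac:(lra)) as [D1 D2].
      destruct (Hder2 t0 ltac:(lra)) as [E1 E2].
      unfold u, D. destruct j as [|[|j]]; try lia; apply dlim_minus; assumption.
    - intros j t0 a Hj Ht0 _ Ha Hlow Hle.
      pose proof (Hlow 0%nat ltac:(lia)) as L0.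
      pose proof (Hlow 1%nat ltac:(lia)) as L1.
      unfold u in L0, L1.
      assert (Hsum : b t0 + d t0 + (1 - b t0 - d t0) = 1) by ring.
      destruct (Reg1 t0 ltac:(lra)) as [R1 R2].
      destruct (Reg2 t0 ltac:(lra)) as [R4 R5].
      destruct (Hy t0 ltac:(lra)) as [Y1 [Y2 Y3]].
      assert (R3 : 0 <= y1 t0 <= 1 - b t0 - d t0) by lra.
      assert (R6 : 0 <= y2 t0 <= 1 - b t0 - d t0) by lra.
      assert (L2 : - a <= y1 t0 - y2 t0) by lra.
      unfold u in Hle; unfold D. destruct j as [|[|j]]; try lia.
      + eapply (cmp0 lam beta Gam a (b t0) (d t0) (1 - b t0 - d t0)); eauto.
      + eapply (cmp1 lam beta Gam a (b t0) (d t0) (1 - b t0 - d t0)); eauto.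
    - exact Hi.
    - lra. }
  pose proof (Hall 0%nat ltac:(lia)); pose proof (Hall 1%nat ltac:(lia)).
  unfold u in *. lra.
Qed.
Theorem lemma4 (lam beta Gam d0 : R) (b d : R -> R)
  (Hlam : 0 < lam) (Hbeta : 0 < beta) (HGam : 0 < Gam <= 1) (Hd0 : 0 < d0 < 1)
  (Hbd : bd_solution lam beta Gam d0 b d) :
  (* (a) *)
  (forall (sig1 sig2 xb1 xd1 y1 xb2 xd2 y2 : R -> R),
     admissible sig1 -> admissible sig2 ->
     (forall t, 0 <= t -> sig1 t >= sig2 t) ->
     f_solution lam beta Gam b d sig1 xb1 xd1 y1 ->
     f_solution lam beta Gam b d sig2 xb2 xd2 y2 ->
     in_region b d 0 (xb1 0) (xd1 0) (y1 0) ->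
     in_region b d 0 (xb2 0) (xd2 0) (y2 0) ->
     xb1 0 >= xb2 0 -> xd1 0 >= xd2 0 -> y1 0 >= y2 0 ->
     forall t, 0 <= t -> xb1 t >= xb2 t /\ xd1 t >= xd2 t /\ y1 t >= y2 t) /\
  (* (b) *)
  (forall (y1 y2 xb1 xd1 xb2 xd2 : R -> R),
     cont_nonneg y1 -> cont_nonneg y2 ->
     (forall t, 0 <= t -> 1 - b t - d t >= y1 t /\ y1 t >= y2 t /\ y2 t >= 0) ->
     g_solution lam beta Gam b d y1 xb1 xd1 ->
     g_solution lam beta Gam b d y2 xb2 xd2 ->
     0 <= xb1 0 <= b 0 -> 0 <= xd1 0 <= d 0 ->
     0 <= xb2 0 <= b 0 -> 0 <= xd2 0 <= d 0 ->
     xb1 0 >= xb2 0 -> xd1 0 >= xd2 0 ->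
     forall t, 0 <= t -> xb1 t >= xb2 t /\ xd1 t >= xd2 t).
Proof.
  split.
  - intros sig1 sig2 xb1 xd1 y1 xb2 xd2 y2 Ha1 Ha2.
    apply (comp_a lam beta Gam d0 b d); try assumption; try lra.
    + destruct Ha1 as [H _]; exact H.
    + destruct Ha2 as [H _]; exact H.
  - intros y1 y2 xb1 xd1 xb2 xd2 _ _.
    apply (comp_b lam beta Gam d0 b d); try assumption; lra.
Qed.
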